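(* Let $D$ be a digraph with $n\ge 2$ vertices and $a$ arcs, and let $\alpha\in[0,1)$. Let $\sigma_{1\alpha}(D)$ be the largest singular value of $A_\alpha(D)$. Then $$\sigma_{1\alpha}(D)\ge \frac{a}{n},$$ with equality if and only if $D$ is $\frac{a}{n}$-regular, i.e. every vertex of $D$ has outdegree $\frac an$ and indegree $\frac an$.
   Context: Digraphs are simple: a finite vertex set and a set of arcs, which are ordered pairs of distinct vertices, with no parallel arcs. For a digraph $D$ on vertices $v_1,\dots,v_n$, the adjacency matrix $A(D)=(a_{ij})$ has $a_{ij}=1$ if $(v_i,v_j)$ is an arc and $0$ otherwise; $d_i^+$ is the outdegree of $v_i$, and $\Delta^+(D)=\mathrm{diag}(d_1^+,\dots,d_n^+)$. For $\alpha\in[0,1)$, $A_\alpha(D)=\alpha\Delta^+(D)+(1-\alpha)A(D)$. The singular values of a real square matrix $B$ are the nonnegative square roots of the eigenvalues of $BB^{T}$, counted with multiplicity. *)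

(* Defs.v *)
From HB Require Import structures.
From mathcomp Require Import all_boot all_order all_algebra.
From mathcomp Require Import reals.
Set Implicit Arguments. Unset Strict Implicit. Unset Printing Implicit Defensive.
Import Order.TTheory GRing.Theory Num.Theory.
Local Open Scope ring_scope.

(* A simple digraph on vertex set 'I_n: its arc set D, a finite set of ordered
   pairs; simplicity (no loops) is the predicate [simple_digraph D].
   Parallel arcs are impossible since D is a set. *)
Definition simple_digraph (n : nat) (D : {set 'I_n * 'I_n}) : Prop :=
  forall i : 'I_n, (i, i) \notin D.

Definition outdeg (n : nat) (D : {set 'I_n * 'I_n}) (i : 'I_n) : nat :=
  #|[set j : 'I_n | (i, j) \in D]|.

Definition indeg (n : nat) (D : {set 'I_n * 'I_n}) (j : 'I_n) : nat :=
  #|[set i : 'I_n | (i, j) \in D]|.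

Definition adjmx (R : realType) (n : nat) (D : {set 'I_n * 'I_n}) : 'M[R]_n :=
  \matrix_(i, j) (((i, j) \in D) : nat)%:R.

Definition outdegmx (R : realType) (n : nat) (D : {set 'I_n * 'I_n}) : 'M[R]_n :=
  diag_mx (\row_i (outdeg D i)%:R).

Definition A_alpha (R : realType) (n : nat) (alpha : R) (D : {set 'I_n * 'I_n})
  : 'M[R]_n :=
  alpha *: outdegmx R D + (1 - alpha) *: adjmx R D.

Definition singular_value (R : realType) (n : nat) (B : 'M[R]_n) (s : R) : Prop :=
  0 <= s /\ eigenvalue (B *m B^T) (s ^+ 2).

Definition largest_singular_value (R : realType) (n : nat) (B : 'M[R]_n) (s : R)
  : Prop :=
  singular_value B s /\ (forall t, singular_value B t -> t <= s).

Definition regular_digraph (R : realType) (n : nat) (D : {set 'I_n * 'I_n}) (r : R)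
  : Prop :=
  forall i : 'I_n, (outdeg D i)%:R = r /\ (indeg D i)%:R = r.

(* Main.v *)
Require Import Defs.
From HB Require Import structures.
From mathcomp Require Import all_boot all_order all_algebra.
From mathcomp Require Import reals.
From mathcomp Require Import complex.
From mathcomp Require Import ring lra.
Import Order.TTheory GRing.Theory Num.Theory.
Local Open Scope ring_scope.
Set Implicit Arguments. Unset Strict Implicit. Unset Printing Implicit Defensive.

Lemma argmax_ex (R : realDomainType) n (g : 'I_n -> R) : (0 < n)%N -> exists k, forall i, g i <= g k.
Proof.
move=> n0; case: (@arg_maxP _ _ _ (Ordinal n0) xpredT g isT) => k _ H.
by exists k => i; apply: H.
Qed.

Lemma spectral_real (R : rcfType) n (M : 'M[R]_n) : (0 < n)%N -> M^T = M ->
 exists lam, [/\ eigenvalue M lam, (forall mu, eigenvalue M mu -> mu <= lam) &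
   forall x : 'rV[R]_n, (x *m M *m x^T) 0 0 <= lam * (x *m x^T) 0 0].
Proof.
move=> n0 MT.
pose f := real_complex R.
have freal : forall x : R, f x \is Num.real by move=> x; rewrite complex_real.
pose Mc := map_mx f M.
have Mcreal : Mc \is a realmx.
  by apply/mxOverP => i j; rewrite mxE.
have herm : Mc \is hermsymmx.
  apply: realsym_hermsym => //.
  apply/is_hermitianmxP; rewrite expr0 scale1r map_mx_id //.
  apply/matrixP => i j; rewrite !mxE; rewrite -[in LHS]MT mxE.
  done.
have /orthomx_spectralP McE := hermitian_normalmx herm.
have dreal := hermitian_spectral_diag_real herm.
set P := spectralmx Mc in McE.
set d := spectral_diag Mc in McE dreal.
have Pu : P \is unitarymx by apply: spectral_unitarymx.
have Punit : P \in unitmx by apply: spectral_unit.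
pose g i := @complex.Re R (d 0 i).
have dE : forall i, d 0 i = f (g i).
  by move=> i; rewrite /g /f RRe_real //; apply: (mxOverP dreal).
have [k kmax] := @argmax_ex _ _ g n0.
exists (g k); split.
- rewrite -(eigenvalue_map f); apply/eigenvalueP; exists (row k P).
  + rewrite -/Mc McE !mulmxA -row_mul mulmxV // row1.
    by rewrite -rowE row_diag_mx -scalemxAl -rowE dE.
  + apply/eqP => /(congr1 (mulmx^~ (invmx P))).
    rewrite -row_mul mulmxV // row1 mul0mx => /matrixP /(_ 0 k).
    by rewrite !mxE !eqxx /= => /eqP; rewrite oner_eq0.
- move=> mu; rewrite -(eigenvalue_map f) => /eigenvalueP [v vE vn0].
  pose w := v *m invmx P.
  have wE : w *m diag_mx d = f mu *: w.
    by have := congr1 (mulmx^~ (invmx P)) vE; rewrite /= -/Mc McE !mulmxA mulmxK // -scalemxAl.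
  have [i wi] : exists i, w 0 i != 0.
    apply/existsP; apply: contraR vn0 => /existsPn H.
    have -> : v = w *m P by rewrite /w mulmxKV.
    suff -> : w = 0 by rewrite mul0mx.
    apply/rowP => j; rewrite [RHS]mxE; have := H j.
    by move/negPn/eqP.
  have : w 0 i * d 0 i = f mu * w 0 i.
    by move/rowP: wE => /(_ i); rewrite mul_mx_diag !mxE.
  move=> /(congr1 (fun t => t / w 0 i)).
  rewrite [w 0 i * _]mulrC !mulrK ?unitfE // dE => /complexI <-.
  by apply: kmax.
- move=> x.
  pose xc := map_mx f x.
  rewrite -lecR.
  have E1 : f ((x *m M *m x^T) 0 0) = (xc *m Mc *m xc^T) 0 0.
    by rewrite /xc /Mc map_trmx -!map_mxM [RHS]mxE.
  have E2 : f ((x *m x^T) 0 0) = (xc *m xc^T) 0 0.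
    by rewrite /xc map_trmx -!map_mxM [RHS]mxE.
  have xcC : map_mx Num.conj xc^T = xc^T.
    apply: realmxC; apply/mxOverP => i j; rewrite !mxE; exact: freal.
  pose y := xc *m invmx P.
  have yC : map_mx Num.conj y^T = P *m xc^T.
    by rewrite /y trmx_mul map_mxM xcC invmx_unitary // trmxCK.
  have EA : xc *m Mc *m xc^T = y *m diag_mx d *m map_mx Num.conj y^T.
    by rewrite yC McE /y !mulmxA.
  have EB : xc *m xc^T = y *m map_mx Num.conj y^T.
    by rewrite yC /y mulmxA mulmxKV.
  rewrite -/f E1.
  have -> : f (g k * (x *m x^T) 0 0) = f (g k) * f ((x *m x^T) 0 0) by rewrite /f rmorphM.
  rewrite E2 EA EB /= -dE.
  rewrite !mxE mulr_sumr; apply: ler_sum => j _.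
  have -> : (y *m diag_mx d) 0 j = y 0 j * d 0 j.
    by rewrite mul_mx_diag mxE.
  rewrite mulrAC [_ * d 0 j]mulrC.
  have -> : (map_mx Num.conj y^T) j 0 = Num.conj (y 0 j) by rewrite !mxE.
  apply: ler_wpM2r.
    by rewrite -normCK exprn_ge0.
  by rewrite !dE lecR.
Qed.

Section Main.
Variable R : realType.

Lemma card_sumR (T : finType) (A : {pred T}) : (#|A|%:R : R) = \sum_x ((x \in A) : nat)%:R.
Proof.
rewrite -sum1_card big_mkcond natr_sum; apply: eq_bigr => x _.
by case: (x \in A).
Qed.

Lemma outdegE n (D : {set 'I_n * 'I_n}) i :
  ((outdeg D i)%:R : R) = \sum_j (((i, j) \in D) : nat)%:R.
Proof. by rewrite /outdeg card_sumR; apply: eq_bigr => j _; rewrite inE. Qed.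

Lemma indegE n (D : {set 'I_n * 'I_n}) j :
  ((indeg D j)%:R : R) = \sum_i (((i, j) \in D) : nat)%:R.
Proof. by rewrite /indeg card_sumR; apply: eq_bigr => i _; rewrite inE. Qed.

Lemma sum_outdeg n (D : {set 'I_n * 'I_n}) :
  \sum_i ((outdeg D i)%:R : R) = #|D|%:R.
Proof.
under eq_bigr do rewrite outdegE.
by rewrite pair_big card_sumR; apply: eq_bigr => -[i j].
Qed.

Lemma sum_indeg n (D : {set 'I_n * 'I_n}) :
  \sum_j ((indeg D j)%:R : R) = #|D|%:R.
Proof.
under eq_bigr do rewrite indegE.
by rewrite exchange_big pair_big card_sumR; apply: eq_bigr => -[i j].
Qed.

Lemma BE n (alpha : R) (D : {set 'I_n * 'I_n}) i j :
  A_alpha alpha D i j = alpha * ((i == j)%:R * (outdeg D i)%:R)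
     + (1 - alpha) * (((i, j) \in D) : nat)%:R.
Proof.
rewrite /A_alpha /outdegmx /adjmx !mxE.
by case: eqP => [->|_]; rewrite ?mulr1n ?mulr0n ?mul1r ?mul0r.
Qed.


Lemma rowsumB n (alpha : R) (D : {set 'I_n * 'I_n}) i :
  \sum_j A_alpha alpha D i j = (outdeg D i)%:R.
Proof.
under eq_bigr do rewrite BE.
rewrite big_split /= -!mulr_sumr -outdegE.
rewrite (bigD1 i) //= eqxx mul1r big1 ?addr0; last first.
  by move=> j; rewrite eq_sym => /negbTE ->; rewrite mul0r.
by rewrite mulrBl mul1r addrC subrK.
Qed.

Lemma colsumB n (alpha : R) (D : {set 'I_n * 'I_n}) j :
  \sum_i A_alpha alpha D i j = alpha * (outdeg D j)%:R + (1 - alpha) * (indeg D j)%:R.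
Proof.
under eq_bigr do rewrite BE.
rewrite big_split /= -!mulr_sumr -indegE.
rewrite (bigD1 j) //= eqxx mul1r big1 ?addr0 //.
by move=> i /negbTE ->; rewrite mul0r.
Qed.

Lemma Bge0 n (alpha : R) (D : {set 'I_n * 'I_n}) i j :
  0 <= alpha -> alpha < 1 -> 0 <= A_alpha alpha D i j.
Proof.
move=> a0 a1; rewrite BE addr_ge0 // mulr_ge0 // ?mulr_ge0 // subr_ge0 ltW //.
Qed.

Lemma quadE m n (A : 'M[R]_(m, n)) (x : 'rV[R]_m) :
  (x *m (A *m A^T) *m x^T) 0 0 = \sum_j ((x *m A) 0 j) ^+ 2.
Proof.
rewrite !mulmxA -mulmxA -trmx_mul [LHS]mxE; apply: eq_bigr => j _.
by rewrite [(_^T) _ _]mxE expr2.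
Qed.

Lemma oneME m n (A : 'M[R]_(m, n)) j : ((const_mx 1 : 'rV[R]_m) *m A) 0 j = \sum_i A i j.
Proof. by rewrite mxE; apply: eq_bigr => i _; rewrite mxE mul1r. Qed.

Lemma oneN n : ((const_mx 1 : 'rV[R]_n) *m (const_mx 1 : 'rV[R]_n)^T) 0 0 = n%:R.
Proof.
rewrite mxE (eq_bigr (fun _ => 1)) ?sumr_const ?card_ord //.
by move=> i _; rewrite !mxE mulr1.
Qed.

Lemma sq_dev n (u : 'I_n -> R) : (0 < n)%N ->
  \sum_i (u i - (\sum_j u j) / n%:R) ^+ 2 = \sum_i u i ^+ 2 - (\sum_j u j) ^+ 2 / n%:R.
Proof.
move=> n0; set S := \sum_j u j.
have nz : (n%:R : R) != 0 by rewrite pnatr_eq0 -lt0n.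
under eq_bigr do rewrite sqrrB.
rewrite !big_split /= sumrN sumr_const card_ord sumrMnl -mulr_suml -/S.
rewrite -[_ *+ n]mulr_natr -[_ *+ 2]mulr_natr.
by field.
Qed.

Lemma gersh n (M : 'M[R]_n) c lam : (forall i k, 0 <= M i k) ->
  (forall k, \sum_i M i k = c) -> eigenvalue M lam -> lam <= c.
Proof.
move=> M0 Mc /eigenvalueP [v vE vn0].
have [i0 _] : exists i0 : 'I_n, true.
  case: n M M0 Mc v vE vn0 => [|n] M M0 Mc v vE vn0; last by exists ord0.
  by case/eqP: vn0; apply/rowP => -[].
have [k kmax] := @argmax_ex _ _ (fun i => `|v 0 i|) (leq_ltn_trans (leq0n _) (ltn_ord i0)).
have vk : 0 < `|v 0 k|.
  rewrite normr_gt0; apply: contraNneq vn0 => vk0.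
  apply/eqP/rowP => j; rewrite mxE; apply/eqP; rewrite -normr_eq0 eq_le normr_ge0 andbT.
  by have := kmax j; rewrite vk0 normr0.
have E : lam * v 0 k = \sum_i v 0 i * M i k.
  by have /rowP /(_ k) := vE; rewrite !mxE => <-.
have : `|lam| * `|v 0 k| <= c * `|v 0 k|.
  rewrite -normrM E -(Mc k) mulr_suml.
  apply: le_trans (ler_norm_sum _ _ _) _; apply: ler_sum => i _.
  rewrite normrM (ger0_norm (M0 i k)) mulrC ler_wpM2l //.
by rewrite ler_pM2r // => H; apply: le_trans (real_ler_norm _) H; rewrite num_real.
Qed.


Lemma transferE n (A : 'M[R]_n) mu : eigenvalue (A^T *m A) mu -> mu != 0 ->
  eigenvalue (A *m A^T) mu.
Proof.
move=> /eigenvalueP [v vE vn0] mu0; apply/eigenvalueP; exists (v *m A^T).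
  by rewrite mulmxA -(mulmxA v) vE scalemxAl.
apply: contraNneq vn0 => w0.
have : mu *: v = 0 by rewrite -vE mulmxA w0 mul0mx.
by move/eqP; rewrite scaler_eq0 (negbTE mu0) /=.
Qed.

Lemma const_from n (u : 'I_n -> R) S : (0 < n)%N -> \sum_j u j = S ->
  \sum_j u j ^+ 2 <= (S / n%:R) ^+ 2 * n%:R -> forall j, u j = S / n%:R.
Proof.
move=> n0 uS uQ.
have nz : (n%:R : R) != 0 by rewrite pnatr_eq0 -lt0n.
have H := sq_dev u n0; rewrite uS in H.
have Hle : \sum_i (u i - S / n%:R) ^+ 2 <= 0.
  rewrite H subr_le0; apply: (le_trans uQ); rewrite le_eqVlt; apply/orP; left.
  by apply/eqP; field.
have H0 : \sum_i (u i - S / n%:R) ^+ 2 = 0.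
  by apply/eqP; rewrite eq_le Hle sumr_ge0 // => i _; rewrite sqr_ge0.
move=> j; have := @psumr_eq0P _ _ _ _ (fun i _ => sqr_ge0 (u i - S / n%:R)) H0 j isT.
by move/eqP; rewrite sqrf_eq0 subr_eq0 => /eqP.
Qed.

End Main.

Unset Implicit Arguments.

Theorem lemma2p9 (R : realType) (n : nat) (D : {set 'I_n * 'I_n}) (alpha : R) :
  (2 <= n)%N -> simple_digraph D -> 0 <= alpha -> alpha < 1 ->
  (exists s : R, largest_singular_value (A_alpha alpha D) s) /\
  (forall s : R, largest_singular_value (A_alpha alpha D) s ->
     #|D|%:R / n%:R <= s /\
     (s = #|D|%:R / n%:R <-> regular_digraph D (#|D|%:R / n%:R : R))).
Proof.
move=> n2 _ a0 a1.
have n0 : (0 < n)%N by apply: leq_trans n2.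
have nR : (0 : R) < n%:R by rewrite ltr0n.
have nz : (n%:R : R) != 0 by rewrite pnatr_eq0 -lt0n.
set B := A_alpha alpha D.
set S : R := #|D|%:R.
pose r := S / n%:R.
pose M := B *m B^T.
have MT : M^T = M by rewrite /M trmx_mul trmxK.
have [lam [lamE lammax lamR]] := spectral_real n0 MT.
pose one := const_mx 1 : 'rV[R]_n.
pose u j := alpha * (outdeg D j)%:R + (1 - alpha) * (indeg D j)%:R.
have sumu : \sum_j u j = S.
  rewrite big_split /= -!mulr_sumr sum_outdeg sum_indeg -/S.
  by rewrite mulrBl mul1r addrC subrK.
have Ru : \sum_j u j ^+ 2 <= lam * n%:R.
  have := lamR one; rewrite /M quadE oneN.
  by under eq_bigr do rewrite oneME colsumB.
have r0 : 0 <= r by rewrite divr_ge0 // ler0n.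
have r2lam : r ^+ 2 <= lam.
  have H := sq_dev u n0; rewrite sumu in H.
  have H0 : 0 <= \sum_i (u i - S / n%:R) ^+ 2 by rewrite sumr_ge0 // => i _; rewrite sqr_ge0.
  rewrite H subr_ge0 in H0.
  have : S ^+ 2 / n%:R <= lam * n%:R := le_trans H0 Ru.
  rewrite /r expr_div_n ler_pdivrMr // => h1.
  rewrite ler_pdivrMr ?exprn_gt0 //.
  by rewrite expr2 mulrA.
have lam0 : 0 <= lam by apply: le_trans r2lam; rewrite sqr_ge0.
have sqle : forall t, 0 <= t -> (t <= Num.sqrt lam) = (t ^+ 2 <= lam).
  move=> t t0.
  by rewrite -[t <= _](ler_pXn2r (_ : 0 < 2)%N) ?nnegrE ?sqrtr_ge0 // sqr_sqrtr.
have singlam : singular_value B (Num.sqrt lam).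
  by split; [rewrite sqrtr_ge0 | rewrite sqr_sqrtr].
have maxlam : forall t, singular_value B t -> t <= Num.sqrt lam.
  by move=> t [t0 tE]; rewrite sqle //; apply: lammax.
split; first by exists (Num.sqrt lam); split.
move=> s [ss smax].
have -> : s = Num.sqrt lam by apply/eqP; rewrite eq_le smax // maxlam.
have rle : r <= Num.sqrt lam by rewrite sqle.
split => //.
split.
- move=> Hs.
  have lamr : lam = r ^+ 2 by rewrite /r -Hs sqr_sqrtr.
  have uc : forall j, u j = r.
    by apply: const_from => //; rewrite -/r -lamr.
  pose M' := B^T *m B^T^T.
  have MT' : M'^T = M' by rewrite /M' trmx_mul trmxK.
  have [lam' [lamE' _ lamR']] := spectral_real n0 MT'.
  have Rd : \sum_j ((outdeg D j)%:R : R) ^+ 2 <= lam' * n%:R.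
    have eqd : forall j, (one *m B^T) 0 j = (outdeg D j)%:R.
      by move=> j; rewrite oneME -(rowsumB alpha D j); apply: eq_bigr => i _; rewrite mxE.
    have := lamR' one; rewrite /M' quadE oneN.
    by under eq_bigr do rewrite eqd.


  have dc : forall j, ((outdeg D j)%:R : R) = r.
    apply: const_from => //; first by rewrite sum_outdeg.
    apply: (le_trans Rd).
    case: (lerP lam' 0) => hl.
      apply: (le_trans (y := 0)); first by rewrite mulr_le0_ge0 // ltW.
      by rewrite mulr_ge0 // ?sqr_ge0 // ltW.
    rewrite ler_pM2r // -/r -lamr; apply: lammax.
    apply: transferE; last by rewrite gt_eqF.
    by move: lamE'; rewrite /M' trmxK.
  move=> j; split; first exact: dc.
  have := uc j; rewrite /u dc => h.
  have a1' : 1 - alpha != 0 by rewrite subr_eq0 eq_sym lt_eqF.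
  apply: (mulfI a1'); move: h.
  by move=> h; rewrite -/r; nra.
- move=> reg; apply/eqP; rewrite eq_le rle andbT.
  have -> : (Num.sqrt lam <= r) = (lam <= r ^+ 2).
    by rewrite -[_ <= r](ler_pXn2r (_ : 0 < 2)%N) ?nnegrE ?sqrtr_ge0 // sqr_sqrtr.
  apply: (gersh (M := M)) => //.
    move=> i k; rewrite /M [(B *m _) _ _]mxE; apply: sumr_ge0 => j _; rewrite [(B^T) _ _]mxE; apply: mulr_ge0; exact: Bge0.
  move=> k.
  have oneB : one *m B = r *: one.
    apply/rowP => j; rewrite oneME colsumB !mxE mulr1.
    by case: (reg j) => -> ->; rewrite mulrBl mul1r addrC subrK.
  rewrite -oneME /M mulmxA oneB -scalemxAl mxE oneME.
  rewrite (eq_bigr (fun i => B k i)) ?rowsumB; last by move=> i _; rewrite mxE.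
  by case: (reg k) => -> _; rewrite expr2.
Qed.
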